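(* Let $\mathcal{V}$ be a variety of algebras, $\mathcal{C}$ a full subcategory of the category of finitely generated free $\mathcal{V}$-algebras containing the free monogenic algebra $A_0$ on $x_0$, and $\Phi$ an automorphism of $\mathcal{C}$ with main function $(s^\Phi_A)$. Let $A$ be a $\mathcal{C}$-algebra with basis $\{x_1,\dots,x_n\}$ and put $y_i=s^\Phi_A(x_i)$ for $i=1,\dots,n$. If $B$ is a $\mathcal{C}$-algebra and $\beta,\gamma:\Phi(A)\to B$ are homomorphisms with $\beta(y_i)=\gamma(y_i)$ for all $i=1,\dots,n$, then $\beta=\gamma$.
   Context: Morphisms of $\mathcal{C}$ are all homomorphisms. For $a\in A$, $\alpha^A_a:A_0\to A$ is the homomorphism with $x_0\mapsto a$. Let $\eta^\Phi_0:\Phi^{-1}(A_0)\to A_0$ be the homomorphism sending every element of a fixed basis of $\Phi^{-1}(A_0)$ to $x_0$ (the identity if $\Phi(A_0)=A_0$), and $\eta^\Phi=\Phi(\eta^\Phi_0):A_0\to\Phi(A_0)$. The main function is $s^\Phi_A:|A|\to|\Phi(A)|$, $s^\Phi_A(a)=\Phi(\alpha^A_a)(\eta^\Phi(x_0))$. *)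

(* Defs.v *)
From mathcomp Require Import all_boot.
From Stdlib Require Import ClassicalEpsilon.
Set Implicit Arguments. Unset Strict Implicit. Unset Printing Implicit Defensive.

Record signature := Signature { op : Type; arity : op -> nat }.

Record algebra (S : signature) := Algebra {
  carrier :> Type;
  interp : forall o : op S, ('I_(arity o) -> carrier) -> carrier }.
Arguments interp {S} _ o _.

Inductive term (S : signature) :=
| Var : nat -> term S
| App : forall o : op S, ('I_(arity o) -> term S) -> term S.

Fixpoint eval (S : signature) (A : algebra S) (v : nat -> A) (t : term S) : A :=
  match t with
  | Var k => v k
  | App o f => interp A o (fun i => eval v (f i))
  end.

(* A variety is given (Birkhoff) by a set E of identities t = u. *)
Definition model (S : signature) (E : term S -> term S -> Prop) (A : algebra S) :=
  forall t u, E t u -> forall v : nat -> A, eval v t = eval v u.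

Definition is_hom (S : signature) (A B : algebra S) (f : A -> B) :=
  forall (o : op S) (args : 'I_(arity o) -> A),
    f (interp A o args) = interp B o (fun i => f (args i)).

Definition is_basis (S : signature) (E : term S -> term S -> Prop)
    (A : algebra S) (n : nat) (x : 'I_n -> A) :=
  model E A /\
  forall B : algebra S, model E B -> forall g : 'I_n -> B,
    exists h : A -> B, [/\ is_hom h, (forall i, h (x i) = g i) &
      forall h' : A -> B, is_hom h' -> (forall i, h' (x i) = g i) ->
        forall a, h' a = h a].
Arguments is_basis {S} E A n x.

Definition fg_free (S : signature) (E : term S -> term S -> Prop) (A : algebra S) :=
  exists n (x : 'I_n -> A), is_basis E A n x.
Arguments fg_free {S} E A.

(* C is given by its class of objects Cobj; morphisms are all homomorphisms.
   A functor is an object map Fobj and a morphism map Fmor; it is an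
   automorphism (isomorphism of categories C -> C) iff it is a functor that is
   bijective on objects and bijective on every hom-set. *)
Record is_automorphism (S : signature) (Cobj : algebra S -> Prop)
    (Fobj : algebra S -> algebra S)
    (Fmor : forall A B : algebra S, (A -> B) -> Fobj A -> Fobj B) : Prop := {
  aut_obj : forall A, Cobj A -> Cobj (Fobj A);
  aut_hom : forall (A B : algebra S) (f : A -> B), Cobj A -> Cobj B ->
    is_hom f -> is_hom (Fmor A B f);
  aut_id : forall A : algebra S, Cobj A -> Fmor A A (fun a => a) = (fun a => a);
  aut_comp : forall (A B C : algebra S) (f : A -> B) (g : B -> C),
    Cobj A -> Cobj B -> Cobj C -> is_hom f -> is_hom g ->
    Fmor A C (fun a => g (f a)) = (fun a => Fmor B C g (Fmor A B f a));
  aut_obj_surj : forall B, Cobj B -> exists A, Cobj A /\ Fobj A = B;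
  aut_obj_inj : forall A A', Cobj A -> Cobj A' -> Fobj A = Fobj A' -> A = A';
  aut_mor_inj : forall (A B : algebra S) (f g : A -> B), Cobj A -> Cobj B ->
    is_hom f -> is_hom g -> Fmor A B f = Fmor A B g -> f = g;
  aut_mor_surj : forall (A B : algebra S) (g : Fobj A -> Fobj B),
    Cobj A -> Cobj B -> is_hom g -> exists f : A -> B, is_hom f /\ Fmor A B f = g
}.

Arguments is_automorphism {S} Cobj Fobj Fmor.

Definition cast_alg (S : signature) (A B : algebra S) (e : A = B) : A -> B :=
  match e in _ = B' return A -> B' with erefl => fun a => a end.

(* alpha^A_a : A0 -> A, the homomorphism with x0 |-> a (chosen by epsilon;
   unique when A0 is free on x0 and A is a V-algebra) *)
Definition alpha (S : signature) (A0 : algebra S) (x0 : A0) (A : algebra S) (a : A)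
  : A0 -> A :=
  epsilon (inhabits (fun _ : A0 => a)) (fun f : A0 -> A => is_hom f /\ f x0 = a).

(* eta^Phi = Phi(eta0) : A0 = Phi(Phi^{-1}(A0)) -> Phi(A0), where
   A0' = Phi^{-1}(A0) (e : Fobj A0' = A0) and eta0 : A0' -> A0. *)
Definition etaPhi (S : signature) (Fobj : algebra S -> algebra S)
    (Fmor : forall A B : algebra S, (A -> B) -> Fobj A -> Fobj B)
    (A0 A0' : algebra S) (e : Fobj A0' = A0) (eta0 : A0' -> A0) : A0 -> Fobj A0 :=
  fun a => Fmor A0' A0 eta0 (cast_alg (esym e) a).

Arguments etaPhi {S} Fobj Fmor A0 A0' e eta0 _.

Definition main_fun (S : signature) (Fobj : algebra S -> algebra S)
    (Fmor : forall A B : algebra S, (A -> B) -> Fobj A -> Fobj B)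
    (A0 : algebra S) (x0 : A0) (A0' : algebra S) (e : Fobj A0' = A0)
    (eta0 : A0' -> A0) (A : algebra S) (a : A) : Fobj A :=
  Fmor A0 A (alpha x0 a) (etaPhi Fobj Fmor A0 A0' e eta0 x0).
Arguments main_fun {S} Fobj Fmor A0 x0 A0' e eta0 A a.

(* Main.v *)
Require Import Defs.
From mathcomp Require Import all_boot.
From Stdlib Require Import ClassicalEpsilon FunctionalExtensionality.

Theorem proposition5
  (S : signature) (E : term S -> term S -> Prop)
  (Cobj : algebra S -> Prop)
  (HC : forall A, Cobj A -> fg_free E A)
  (A0 : algebra S) (x0 : A0) (HA0 : Cobj A0) (HA0b : is_basis E A0 1 (fun _ => x0))
  (Fobj : algebra S -> algebra S)
  (Fmor : forall A B : algebra S, (A -> B) -> Fobj A -> Fobj B)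
  (HF : is_automorphism Cobj Fobj Fmor)
  (A0' : algebra S) (HA0' : Cobj A0') (e : Fobj A0' = A0)
  (m : nat) (z : 'I_m -> A0') (Hz : is_basis E A0' m z)
  (eta0 : A0' -> A0) (Heta0 : is_hom eta0) (Heta0z : forall j, eta0 (z j) = x0)
  (A : algebra S) (HA : Cobj A) (n : nat) (x : 'I_n -> A) (Hx : is_basis E A n x)
  (B : algebra S) (HB : Cobj B) (beta gamma : Fobj A -> B)
  (Hbeta : is_hom beta) (Hgamma : is_hom gamma)
  (Hy : forall i : 'I_n,
     beta (main_fun Fobj Fmor A0 x0 A0' e eta0 A (x i)) = gamma (main_fun Fobj Fmor A0 x0 A0' e eta0 A (x i))) :
  beta = gamma.
Proof.
have Hmod : forall X, Cobj X -> model E X.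
  by move=> X /HC [k [y [Hm _]]].
have homC : forall (X Y Z : algebra S) (f : X -> Y) (g : Y -> Z),
    is_hom f -> is_hom g -> is_hom (fun a => g (f a)).
  by move=> X Y Z f g Hf Hg o args; rewrite Hf Hg.
have Halpha : forall (X : algebra S) (a : X), model E X ->
    is_hom (alpha x0 a) /\ alpha x0 a x0 = a.
  move=> X a HX; rewrite /alpha; apply: (epsilon_spec (inhabits (fun _ : A0 => a)) (fun f : A0 -> X => is_hom f /\ f x0 = a)).
  have [h [Hh1 Hh2 _]] := proj2 HA0b X HX (fun _ => a).
  by exists h; split => //; apply: (Hh2 ord0).
have Huniq0 : forall (X : algebra S) (f g : A0 -> X), model E X ->
    is_hom f -> is_hom g -> f x0 = g x0 -> f = g.
  move=> X f g HX Hf Hg Hfg.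
  have [h [Hh1 Hh2 Hh3]] := proj2 HA0b X HX (fun _ => f x0).
  apply: functional_extensionality => a.
  by rewrite (Hh3 f Hf (fun _ => erefl)) (Hh3 g Hg (fun _ => esym Hfg)).
have [B' [HB' eB]] := aut_obj_surj HF HB.
subst B.
have [b' [Hb' eb]] := aut_mor_surj HF HA HB' Hbeta.
have [g' [Hg' eg]] := aut_mor_surj HF HA HB' Hgamma.
subst beta gamma.
have HmB' := Hmod _ HB'.
have HmFB' := Hmod _ (aut_obj HF HB').
set s := fun b : B' => main_fun Fobj Fmor A0 x0 A0' e eta0 B' b.
have Hcomp : forall (f : A -> B') (a : A), is_hom f ->
    Fmor A B' f (main_fun Fobj Fmor A0 x0 A0' e eta0 A a) = s (f a).
  move=> f a Hf; rewrite /s /main_fun.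
  have [Ha1 Ha2] := Halpha A a (Hmod _ HA).
  have [Hb1 Hb2] := Halpha B' (f a) HmB'.
  have -> : alpha x0 (f a) = (fun c => f (alpha x0 a c)).
    apply: Huniq0 => //; first exact: homC.
    by rewrite Hb2 Ha2.
  by rewrite (aut_comp HF HA0 HA HB' Ha1 Hf).
case: m z Hz Heta0z => [|m] z Hz Heta0z.
  suff sub : forall u v : Fobj B', u = v.
    by apply: functional_extensionality => a; apply: sub.
  subst A0.
  have homsEq : forall f g : Fobj A0' -> Fobj B', is_hom f -> is_hom g -> f = g.
    move=> f g Hf Hg.
    have [f' [Hf' ef]] := aut_mor_surj HF HA0' HB' Hf.
    have [g'' [Hg'' eg]] := aut_mor_surj HF HA0' HB' Hg.
    subst f g; f_equal.
    have [h [Hh1 Hh2 Hh3]] := proj2 Hz B' HmB' (fun i => match i with Ordinal k hk => False_rect _ (notF hk) end).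
    apply: functional_extensionality => a.
    rewrite (Hh3 f' Hf'); last by case.
    by rewrite (Hh3 g'' Hg''); last by case.
  move=> u v.
  have [Hu1 Hu2] := Halpha _ u HmFB'.
  have [Hv1 Hv2] := Halpha _ v HmFB'.
  by rewrite -Hu2 -Hv2 (homsEq _ _ Hu1 Hv1).
have sinj : forall b c : B', s b = s c -> b = c.
  move=> b c; subst A0; rewrite /s /main_fun /etaPhi /=.
  have [Hb1 Hb2] := Halpha B' b HmB'.
  have [Hc1 Hc2] := Halpha B' c HmB'.
  rewrite -!(equal_f (aut_comp HF HA0' HA0 HB' Heta0 _)) //.
  move=> Hbc.
  have : Fmor A0' B' (fun a => alpha x0 b (eta0 a)) = Fmor A0' B' (fun a => alpha x0 c (eta0 a)).
    apply: Huniq0 => //; by apply: (aut_hom HF) => //; apply: homC.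
  move/(aut_mor_inj HF HA0' HB' (homC _ _ _ _ _ Heta0 Hb1) (homC _ _ _ _ _ Heta0 Hc1)).
  move/(equal_f)/(_ (z ord0)).
  by rewrite Heta0z Hb2 Hc2.
have Hxi : forall i, b' (x i) = g' (x i).
  by move=> i; apply: sinj; rewrite -!Hcomp //; apply: Hy.
have [h [Hh1 Hh2 Hh3]] := proj2 Hx B' HmB' (fun i => b' (x i)).
have -> : b' = g'.
  apply: functional_extensionality => a.
  by rewrite (Hh3 b' Hb' (fun _ => erefl)) (Hh3 g' Hg' (fun i => esym (Hxi i))).
by [].
Qed.
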